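(* Let $T:\mathbb{Z}\to\mathbb{Z}$ be defined by $T(n)=n/2$ if $n$ is even and $T(n)=(3n+1)/2$ if $n$ is odd, and let $T_R:\mathbb{Z}\to\mathbb{Z}$ be defined by $$T_R(n)=\begin{cases}\dfrac{3n}{4}, & n\equiv 0\pmod 4,\\[2pt] \dfrac{n-2}{4}, & n\equiv 2\pmod 4,\\[2pt] \dfrac{3n+1}{2}, & n\equiv 1\pmod 2.\end{cases}$$ Then the following are equivalent: (a) for every positive integer $n$, some iterate $T^k(n)$ equals $1$ (the $3x+1$ conjecture); (b) for every integer $n\ge 0$, the $T_R$-trajectory of $n$ converges to $0$, i.e., $T_R^k(n)=0$ for some $k\ge 0$.
   Context: Iterates are defined by $f^0(n)=n$, $f^{k+1}(n)=f(f^k(n))$; the $f$-trajectory of $n$ is $(f^k(n))_{k\ge0}$. Note $0$ is a fixed point of $T_R$. *)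

(* Defs.v *)
From Stdlib Require Import ZArith.
Open Scope Z_scope.

Definition T (n : Z) : Z :=
  if Z.even n then n / 2 else (3 * n + 1) / 2.

Definition T_R (n : Z) : Z :=
  if Z.odd n then (3 * n + 1) / 2
  else if n mod 4 =? 0 then (3 * n) / 4
  else (n - 2) / 4.

Fixpoint iterate (f : Z -> Z) (k : nat) (n : Z) : Z :=
  match k with
  | O => n
  | S k' => f (iterate f k' n)
  end.

(* Main.v *)
Require Import Defs.
From Stdlib Require Import ZArith Lia.
Open Scope Z_scope.

Lemma iterate_add f a b n : iterate f (a + b) n = iterate f a (iterate f b n).
Proof. induction a; simpl; congruence. Qed.

Lemma ev2 k : Z.even (2*k) = true.
Proof. rewrite Z.even_mul; reflexivity. Qed.
Lemma ev2o k : Z.even (2*k+1) = false.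
Proof. rewrite Z.even_add, Z.even_mul; reflexivity. Qed.
Lemma od2 k : Z.odd (2*k) = false.
Proof. rewrite Z.odd_mul; reflexivity. Qed.
Lemma od2o k : Z.odd (2*k+1) = true.
Proof. rewrite Z.odd_add, Z.odd_mul; reflexivity. Qed.

Lemma T_even k : T (2*k) = k.
Proof. unfold T; rewrite ev2. rewrite Z.mul_comm; apply Z.div_mul; lia. Qed.
Lemma T_odd k : T (2*k+1) = 3*k+2.
Proof. unfold T; rewrite ev2o.
  replace (3 * (2 * k + 1) + 1) with ((3*k+2)*2) by ring. apply Z.div_mul; lia. Qed.

Lemma TR_odd k : T_R (2*k+1) = 3*k+2.
Proof. unfold T_R; rewrite od2o.
  replace (3 * (2 * k + 1) + 1) with ((3*k+2)*2) by ring. apply Z.div_mul; lia. Qed.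
Lemma TR_0 q : T_R (4*q) = 3*q.
Proof. unfold T_R. replace (4*q) with (2*(2*q)) by ring. rewrite od2.
  replace (2*(2*q)) with (q*4) by ring. rewrite Z.mod_mul by lia. change (0 =? 0) with true; cbv iota.
  replace (3*(q*4)) with ((3*q)*4) by ring. apply Z.div_mul; lia. Qed.
Lemma TR_2 q : T_R (4*q+2) = q.
Proof. unfold T_R. replace (4*q+2) with (2*(2*q+1)) by ring. rewrite od2.
  replace (2*(2*q+1)) with (2 + q*4) by ring. rewrite Z.mod_add by lia. change (2 mod 4 =? 0) with false; cbv iota.
  replace (2 + q*4 - 2) with (q*4) by ring. apply Z.div_mul; lia. Qed.

Lemma step n : exists j, (1 <= j <= 2)%nat /\ iterate T j (3*n+2) = 3 * T_R n + 2.
Proof.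
  assert (exists q r, n = 4*q + r /\ 0 <= r < 4) as [q [r [Hn Hr]]].
  { exists (n/4), (n mod 4). split. apply Z.div_mod; lia. apply Z.mod_pos_bound; lia. }
  assert (r = 0 \/ r = 1 \/ r = 2 \/ r = 3) as [E|[E|[E|E]]] by lia;
    subst r; subst n.
  - exists 2%nat; split; [lia|]. cbn [iterate]. rewrite Z.add_0_r, TR_0.
    replace (3*(4*q)+2) with (2*(2*(3*q))+2*1) by ring.
    rewrite <- Z.mul_add_distr_l, T_even, T_odd. ring.
  - exists 1%nat; split; [lia|]. cbn [iterate].
    replace (4*q+1) with (2*(2*q)+1) by ring. rewrite TR_odd.
    replace (3*(2*(2*q)+1)+2) with (2*(6*q+2)+1) by ring. rewrite T_odd. ring.
  - exists 2%nat; split; [lia|]. cbn [iterate]. rewrite TR_2.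
    replace (3*(4*q+2)+2) with (2*(2*(3*q+2))) by ring.
    rewrite T_even, T_even. ring.
  - exists 1%nat; split; [lia|]. cbn [iterate].
    replace (4*q+3) with (2*(2*q+1)+1) by ring. rewrite TR_odd.
    replace (3*(2*(2*q+1)+1)+2) with (2*(6*q+5)+1) by ring. rewrite T_odd. ring.
Qed.

Lemma forward k : forall n, exists t, (k <= t)%nat /\
  iterate T t (3*n+2) = 3 * iterate T_R k n + 2.
Proof.
  induction k; intro n.
  - exists 0%nat; split; [lia|reflexivity].
  - destruct (IHk n) as [t [Ht Et]].
    destruct (step (iterate T_R k n)) as [j [Hj Ej]].
    exists (j + t)%nat; split; [lia|].
    rewrite iterate_add, Et, Ej. reflexivity.
Qed.

Lemma from1 i : iterate T i 1 = 1 \/ iterate T i 1 = 2.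
Proof.
  induction i; simpl; [auto|].
  destruct IHi as [E|E]; rewrite E; [right|left]; reflexivity.
Qed.

Theorem theorem1 :
  (forall n : Z, 0 < n -> exists k : nat, iterate T k n = 1) <->
  (forall n : Z, 0 <= n -> exists k : nat, iterate T_R k n = 0).
Proof.
  split.
  - intros H n Hn.
    destruct (H (3*n+2) ltac:(lia)) as [K HK].
    destruct (forward K n) as [t [Ht Et]].
    exists K.
    replace t with ((t - K) + K)%nat in Et by lia.
    rewrite iterate_add, HK in Et.
    destruct (from1 (t - K)); lia.
  - intros H.
    assert (H3 : forall m, 0 <= m -> exists k, iterate T k (3*m+2) = 1).
    { intros m Hm. destruct (H m Hm) as [k Hk].
      destruct (forward k m) as [t [_ Et]]. rewrite Hk in Et.
      exists (S t). cbn [iterate]. rewrite Et. reflexivity. }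
    assert (G : forall N : nat, forall n, 0 < n <= Z.of_nat N ->
              exists k, iterate T k n = 1).
    { induction N; intros n Hn; [lia|].
      assert (exists k, n = 2*k \/ n = 2*k+1) as [k [Hk|Hk]].
      { exists (n/2). pose proof (Z.div_mod n 2 ltac:(lia)).
        pose proof (Z.mod_pos_bound n 2 ltac:(lia)). lia. }
      all: subst n.
      - destruct (IHN k ltac:(lia)) as [k' E].
        exists (k' + 1)%nat. rewrite iterate_add. cbn [iterate]. rewrite T_even. exact E.
      - destruct (H3 k ltac:(lia)) as [k' E].
        exists (k' + 1)%nat. rewrite iterate_add. cbn [iterate]. rewrite T_odd. exact E. }
    intros n Hn. apply (G (Z.to_nat n)). lia.
Qed.
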